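(* Let $L_{\max}\ge 2$ be an integer and let $\mu_1,\dots,\mu_{L_{\max}}$ be real constants satisfying $\mu_t\ge \mu_{\min}$ for all $t\in\{1,\dots,L_{\max}\}$, for some $\mu_{\min}>0$. For $\theta\in\mathbb{R}$ let $p=\sigma(\theta)$, where $\sigma(x)=1/(1+e^{-x})$, and define $$J(\theta)=\sum_{t=1}^{L_{\max}}\mu_t\,(1-\sigma(\theta))^{t-1}.$$ Let $\theta(s)$, $s\ge 0$, be the solution of the gradient-flow ODE $\frac{d\theta(s)}{ds}=J'(\theta(s))$, $\theta(0)=\theta_0\in\mathbb{R}$, and set $p(s)=\sigma(\theta(s))$. Then: (1) $p(s)$ is strictly decreasing in $s$ and $p(s)\to 0$ as $s\to\infty$; (2) there exist constants $S,K>0$ such that $p(s)\le K/s$ for all $s\ge S$. Consequently, the expected path length $\mathbb{E}[\tau]=\sum_{t=1}^{L_{\max}}(1-p(s))^{t-1}$ converges to $L_{\max}$ as $s\to\infty$.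
   Context: Stylized model of a path-generating policy that only makes continue/stop decisions: at each step $t\in\{1,\dots,L_{\max}\}$ the policy stops with the position-independent probability $p=\sigma(\theta)$, and $\tau\le L_{\max}$ denotes the stopping time (path length), so $\mathbb{P}(\tau\ge t)=(1-p)^{t-1}$. The total return is $G=\sum_{t=1}^{\tau}r_t$ with step rewards $r_t$, and $\mu_t:=\mathbb{E}[r_t\mid \tau\ge t]$ is assumed not to depend on $\theta$; then $J(\theta)=\mathbb{E}[G]=\sum_{t=1}^{L_{\max}}\mu_t(1-p)^{t-1}$, which is the function defined in the claim. The hypothesis $\mu_t\ge\mu_{\min}>0$ expresses that the expected step-level reward is positive at every step. *)

(* Defs.v *)
From Stdlib Require Import Reals.
From Coquelicot Require Import Coquelicot.
Open Scope R_scope.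

Definition logistic (x : R) : R := 1 / (1 + exp (- x)).

(* J(theta) = sum_{t=1}^{Lmax} mu_t (1 - logistic theta)^(t-1);
   Stdlib's [sum_f 1 Lmax f] is f 1 + ... + f Lmax. *)
Definition J (Lmax : nat) (mu : nat -> R) (theta : R) : R :=
  sum_f 1 Lmax (fun t => mu t * (1 - logistic theta) ^ (t - 1)).

Definition expected_length (Lmax : nat) (p : R) : R :=
  sum_f 1 Lmax (fun t => (1 - p) ^ (t - 1)).

(* Main.v *)
Require Import Defs.
From Stdlib Require Import Reals Lra Lia.
From Coquelicot Require Import Coquelicot.
Open Scope R_scope.

Lemma sumf1 (u : nat -> R) (m : nat) :
  sum_f 1 (S m) u = sum_f_R0 (fun k => u (S k)) m.
Proof. rewrite sum_f_u_Sk; [|lia]. now rewrite sum_f_rw_0. Qed.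

Lemma D_sum (F dF : nat -> R -> R) x m :
  (forall k, is_derive (F k) x (dF k x)) ->
  is_derive (fun y => sum_f_R0 (fun k => F k y) m) x (sum_f_R0 (fun k => dF k x) m).
Proof.
  intros H; induction m as [|m IH]; simpl; [apply H|].
  exact (is_derive_plus _ _ _ _ _ IH (H (S m))).
Qed.

Lemma logistic_pos x : 0 < logistic x < 1.
Proof.
  unfold logistic. assert (0 < exp (-x)) by apply exp_pos.
  split. apply Rdiv_lt_0_compat; lra.
  apply Rmult_lt_reg_r with (1 + exp (-x)); [lra|].
  field_simplify; lra.
Qed.

Lemma logistic_incr x y : x < y -> logistic x < logistic y.
Proof.
  intros Hxy; unfold logistic.
  assert (exp (-y) < exp (-x)) by (apply exp_increasing; lra).
  assert (0 < exp (-y)) by apply exp_pos.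
  unfold Rdiv; rewrite !Rmult_1_l. apply Rinv_lt_contravar; nra.
Qed.

Lemma logistic_le x y : x <= y -> logistic x <= logistic y.
Proof. intros [H|H]; [left; now apply logistic_incr| subst; lra]. Qed.

Lemma D_logistic x : is_derive logistic x (logistic x * (1 - logistic x)).
Proof.
  unfold logistic. auto_derive.
  - assert (0 < exp (-x)) by apply exp_pos; lra.
  - assert (0 < exp (-x)) by apply exp_pos. field; lra.
Qed.

Definition Dval (Lmax : nat) (mu : nat -> R) (th : R) : R :=
  sum_f_R0 (fun k => mu (S k) * (INR k * (- (logistic th * (1 - logistic th)))
     * (1 - logistic th) ^ Init.Nat.pred k)) (Init.Nat.pred Lmax).

Lemma J_rw Lmax mu th : (1 <= Lmax)%nat ->
  J Lmax mu th = sum_f_R0 (fun k => mu (S k) * (1 - logistic th) ^ k) (Init.Nat.pred Lmax).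
Proof.
  intros HL. destruct Lmax as [|m]; [lia|]. unfold J. rewrite sumf1. simpl.
  apply sum_eq; intros i _. now rewrite Nat.sub_0_r.
Qed.

Lemma D_J Lmax mu th : (1 <= Lmax)%nat -> is_derive (J Lmax mu) th (Dval Lmax mu th).
Proof.
  intros HL.
  apply is_derive_ext with (fun y => sum_f_R0 (fun k => mu (S k) * (1 - logistic y) ^ k) (Init.Nat.pred Lmax)).
  { intros t; now rewrite J_rw. }
  unfold Dval.
  apply (D_sum (fun k y => mu (S k) * (1 - logistic y) ^ k)
     (fun k y => mu (S k) * (INR k * (- (logistic y * (1 - logistic y))) * (1 - logistic y) ^ Init.Nat.pred k))).
  intros k. apply is_derive_Reals.
  apply (derivable_pt_lim_scal (fun y => (1 - logistic y) ^ k) (mu (S k)) th).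
  apply is_derive_Reals. apply (is_derive_pow (fun y => 1 - logistic y) k th).
  replace (- (logistic th * (1 - logistic th))) with (0 - logistic th * (1 - logistic th)) by ring.
  apply is_derive_Reals.
  apply (derivable_pt_lim_minus (fun _ => 1) logistic).
  apply derivable_pt_lim_const. apply is_derive_Reals, D_logistic.
Qed.

Lemma sum_le_1 (g : nat -> R) n : (1 <= n)%nat -> g 0%nat = 0 ->
  (forall k, (k <= n)%nat -> g k <= 0) -> sum_f_R0 g n <= g 1%nat.
Proof.
  intros Hn H0 Hk. induction n as [|n IH]; [lia|].
  destruct n as [|n].
  - simpl. rewrite H0; lra.
  - simpl sum_f_R0 at 1. fold (sum_f_R0 g (S n)). 
    assert (sum_f_R0 g (S n) <= g 1%nat) by (apply IH; [lia| intros; apply Hk; lia]).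
    assert (g (S (S n)) <= 0) by (apply Hk; lia). simpl in *. lra.
Qed.

Lemma Dval_bound Lmax mu mu_min th : (2 <= Lmax)%nat -> 0 < mu_min ->
  (forall t, (1 <= t <= Lmax)%nat -> mu_min <= mu t) ->
  Dval Lmax mu th <= - mu_min * (logistic th * (1 - logistic th)).
Proof.
  intros HL Hm Hmu. unfold Dval.
  pose proof (logistic_pos th) as [Hp Hq].
  assert (Hpq : 0 < logistic th * (1 - logistic th)) by nra.
  eapply Rle_trans; [apply sum_le_1|].
  - lia.
  - simpl; ring.
  - intros k Hk. assert (mu_min <= mu (S k)) by (apply Hmu; lia).
    assert (0 <= INR k) by apply pos_INR.
    assert (0 <= (1 - logistic th) ^ Init.Nat.pred k) by (apply pow_le; lra).
    assert (0 <= INR k * (logistic th * (1 - logistic th)) * (1 - logistic th) ^ Init.Nat.pred k)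
      by (apply Rmult_le_pos; [apply Rmult_le_pos|]; lra).
    nra.
  - simpl. assert (mu_min <= mu 2%nat) by (apply Hmu; lia). nra.
Qed.

Lemma ball_R x e y : ball x e y -> Rabs (y - x) < e.
Proof. unfold ball; simpl; unfold AbsRing_ball, abs, minus, plus, opp; simpl. auto. Qed.

Lemma ball_R' x e y : Rabs (y - x) < e -> ball x e y.
Proof. unfold ball; simpl; unfold AbsRing_ball, abs, minus, plus, opp; simpl. auto. Qed.

Definition Epoly (Lmax : nat) (p : R) := sum_f_R0 (fun k => (1 - p) ^ k) (Init.Nat.pred Lmax).

Lemma E_rw Lmax p : (1 <= Lmax)%nat -> expected_length Lmax p = Epoly Lmax p.
Proof.
  intros HL. destruct Lmax as [|m]; [lia|]. unfold expected_length, Epoly. rewrite sumf1. simpl.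
  apply sum_eq; intros i _. now rewrite Nat.sub_0_r.
Qed.

Lemma E_cont Lmax x : continuous (Epoly Lmax) x.
Proof.
  apply (ex_derive_continuous (K:=R_AbsRing) (V:=R_NormedModule)). eexists. unfold Epoly.
  apply (D_sum (fun k p => (1 - p) ^ k) (fun k p => INR k * (0 - 1) * (1 - p) ^ Init.Nat.pred k)).
  intros k. apply (is_derive_pow (fun y => 1 - y) k x).
  apply is_derive_Reals. apply (derivable_pt_lim_minus (fun _ => 1) id).
  apply derivable_pt_lim_const. apply derivable_pt_lim_id.
Qed.

Lemma E0 Lmax : (1 <= Lmax)%nat -> Epoly Lmax 0 = INR Lmax.
Proof.
  intros HL. unfold Epoly.
  rewrite (sum_eq _ (fun _ => 1)). 2:{ intros; rewrite Rminus_0_r; apply pow1. }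
  rewrite sum_cte. rewrite Nat.succ_pred_pos; [ring|lia].
Qed.

Theorem theoremA1 (Lmax : nat) (mu : nat -> R) (mu_min theta0 : R)
  (theta : R -> R) :
  (2 <= Lmax)%nat ->
  0 < mu_min ->
  (forall t, (1 <= t <= Lmax)%nat -> mu_min <= mu t) ->
  theta 0 = theta0 ->
  (forall s, 0 < s -> is_derive theta s (Derive (J Lmax mu) (theta s))) ->
  filterlim theta (at_right 0) (locally theta0) ->
  ((forall s1 s2, 0 <= s1 -> s1 < s2 -> logistic (theta s2) < logistic (theta s1)) /\
   is_lim (fun s => logistic (theta s)) p_infty 0) /\
  (exists S K, 0 < S /\ 0 < K /\
     forall s, S <= s -> logistic (theta s) <= K / s) /\
  is_lim (fun s => expected_length Lmax (logistic (theta s))) p_infty (INR Lmax).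
Proof.
  intros HL Hm Hmu H0 Hd Hc.
  assert (HD : forall s, 0 < s -> is_derive theta s (Dval Lmax mu (theta s))).
  { intros s Hs. rewrite <- (is_derive_unique _ _ _ (D_J Lmax mu (theta s) ltac:(lia))). now apply Hd. }
  assert (Hbd : forall x, Dval Lmax mu x <= - mu_min * (logistic x * (1 - logistic x)))
    by (intros; now apply Dval_bound).
  assert (Hneg : forall x, Dval Lmax mu x < 0).
  { intros x. pose proof (logistic_pos x). specialize (Hbd x).
    assert (0 < logistic x * (1 - logistic x)) by nra. nra. }
  assert (Hdec : forall a b, 0 < a -> a < b -> theta b < theta a).
  { intros a b Ha Hab.
    destruct (MVT_cor2 theta (fun s => Dval Lmax mu (theta s)) a b Hab) as [c [Hc1 Hc2]].
    { intros c Hcc. apply is_derive_Reals. apply HD. lra. }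
    specialize (Hneg (theta c)). nra. }
  assert (Hle0 : forall a, 0 < a -> theta a <= theta0).
  { intros a Ha. destruct (Rle_dec (theta a) theta0) as [h|h]; [exact h|]. exfalso.
    apply Rnot_le_lt in h.
    pose (eps := mkposreal _ (proj2 (Rlt_0_minus _ _) h)).
    apply filterlim_locally with (eps := eps) in Hc.
    destruct Hc as [d Hdd].
    set (y := Rmin (d/2) (a/2)).
    assert (Hy0 : 0 < y) by (unfold y; apply Rmin_glb_lt; pose proof (cond_pos d); lra).
    assert (Hya : y < a) by (unfold y; pose proof (Rmin_r (d/2) (a/2)); lra).
    assert (Hyd : y <= d/2) by apply Rmin_l.
    assert (B : ball theta0 eps (theta y)).
    { apply Hdd; [|exact Hy0]. apply ball_R'. rewrite Rminus_0_r, Rabs_pos_eq; pose proof (cond_pos d); lra. }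
    apply ball_R in B. simpl in B. apply Rabs_lt_between in B.
    specialize (Hdec y a Hy0 Hya). lra. }
  assert (Hdec0 : forall b, 0 < b -> theta b < theta0).
  { intros b Hb. specialize (Hdec (b/2) b ltac:(lra) ltac:(lra)). specialize (Hle0 (b/2) ltac:(lra)). lra. }
  set (q1 := 1 - logistic (theta (1/2))).
  assert (Hq1 : 0 < q1) by (unfold q1; pose proof (logistic_pos (theta (1/2))); lra).
  set (c0 := mu_min * q1 ^ 2).
  assert (Hc0 : 0 < c0) by (unfold c0; apply Rmult_lt_0_compat; [lra| apply pow_lt; lra]).
  assert (Hrate : forall s, 1 <= s -> logistic (theta s) <= (2 / c0) / s).
  { intros s Hs.
    destruct (MVT_cor2 (fun x => exp (- theta x)) (fun x => exp (- theta x) * - Dval Lmax mu (theta x)) (1/2) s ltac:(lra))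
      as [c [Hc1 Hc2]].
    { intros c Hcc. apply is_derive_Reals.
      replace (exp (- theta c) * - Dval Lmax mu (theta c)) with
        (scal (Dval Lmax mu (theta c)) (- exp (- theta c))) by (unfold scal; simpl; unfold mult; simpl; ring).
      apply (is_derive_comp (fun y => exp (- y)) theta).
      - auto_derive; auto; ring.
      - apply HD; lra. }
    simpl in Hc2.
    assert (Hcq : q1 <= 1 - logistic (theta c)).
    { unfold q1. assert (theta c < theta (1/2)) by (apply Hdec; lra).
      pose proof (logistic_incr _ _ H). lra. }
    set (th := theta c) in *.
    assert (Hu : 0 < exp (- th)) by apply exp_pos.
    assert (Hid : exp (- th) * logistic th = 1 - logistic th)
      by (unfold logistic; field; lra).
    assert (Hder : c0 <= exp (- th) * - Dval Lmax mu th).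
    { specialize (Hbd th). pose proof (logistic_pos th).
      assert (exp (- th) * - Dval Lmax mu th >= exp (-th) * (mu_min * (logistic th * (1 - logistic th)))) by nra.
      assert (exp (-th) * (mu_min * (logistic th * (1 - logistic th))) = mu_min * (1 - logistic th)^2).
      { rewrite <- Hid. ring. }
      unfold c0. assert (q1^2 <= (1 - logistic th)^2) by (simpl; nra). nra. }
    assert (Hus : c0 * s / 2 <= exp (- theta s)).
    { assert (0 < exp (- theta (1/2))) by apply exp_pos. nra. }
    assert (Hpos : 0 < c0 * s / 2) by nra.
    unfold logistic.
    apply Rle_trans with (1 / (c0 * s / 2)).
    - unfold Rdiv at 1 2. rewrite !Rmult_1_l. apply Rinv_le_contravar; [exact Hpos|]. lra.
    - right. field. split; lra. }
  assert (Hlim : is_lim (fun s => logistic (theta s)) p_infty 0).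
  { apply (is_lim_le_le_loc (fun _ => 0) (fun s => (2/c0) * / s)).
    - exists 1. intros x Hx. split; [left; apply logistic_pos|]. apply Hrate; lra.
    - apply is_lim_const.
    - replace (Finite 0) with (Rbar_mult (2/c0) (Rbar_inv p_infty)) by (simpl; f_equal; ring).
      apply is_lim_scal_l. apply is_lim_inv. apply is_lim_id. discriminate. }
  split; [split|split].
  - intros s1 s2 Hs1 Hs12. apply logistic_incr.
    destruct Hs1 as [Hs1|Hs1].
    + apply Hdec; auto.
    + subst s1. rewrite H0. apply Hdec0. lra.
  - exact Hlim.
  - exists 1, (2/c0). split; [lra|]. split; [apply Rdiv_lt_0_compat; lra|]. exact Hrate.
  - apply is_lim_ext with (fun s => Epoly Lmax (logistic (theta s))).
    { intros; symmetry; apply E_rw; lia. }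
    rewrite <- E0 by lia.
    apply (filterlim_comp _ _ _ (fun s => logistic (theta s)) (Epoly Lmax) (Rbar_locally p_infty) (locally 0)).
    + exact Hlim.
    + apply E_cont.
Qed.
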